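(* Let $S$ be a simple $(l,r)$-framed algebra. Let $\alpha_1,\alpha_2\in C_S$, $(d,c)\in I_S$, $a_1\in S_{(0,\alpha_1)}$, $a_2\in S_{(0,\alpha_2)}$ and $v\in S_{(d,c)}$. Then $a_2\cdot(a_1\cdot v)=(-1)^{|\alpha_1\alpha_2|}a_1\cdot(a_2\cdot v)$ and $a_1\cdot(a_2\cdot v)=(a_1\cdot a_2)\cdot v$. In particular $A_S(0)=\bigoplus_{\alpha}S_{(0,\alpha)}$ is an associative algebra and $S$ is an $A_S(0)$-module.
   Context: Let $\mathrm{IS}=\{0,\frac12,\frac1{16}\}$ with fusion rule $\star$ (values are subsets): $0\star h=h\star0=\{h\}$, $\frac12\star\frac12=\{0\}$, $\frac12\star\frac1{16}=\frac1{16}\star\frac12=\{\frac1{16}\}$, $\frac1{16}\star\frac1{16}=\{0,\frac12\}$; $A(h_0,h_1,h_2,h_3)=\{h: h\in h_2\star h_3,\ h_0\in h_1\star h\}$. For $h\in A(h_0,h_1,h_2,h_3)$, $h'\in A(h_0,h_2,h_1,h_3)$ define $B^{h,h'}_{h_0,h_1,h_2,h_3}$: $B_{*,0,*,*}=B_{*,*,0,*}=1$; $B_{*,\frac12,\frac12,*}=-1$; $B_{a,\frac12,\frac1{16},a'}=B_{a,\frac1{16},\frac12,a'}=i$ if $a$ or $a'$ is $\frac12$, else $-i$; $B^{b,b'}_{a,\frac1{16},\frac1{16},a'}=e^{-\pi i/8}\cdot\{1$ if $a,a'\ne\frac1{16},a=a'$; $i$ if $a,a'\neq\frac1{16},a\ne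 a'$; $\frac{1+i}2$ if $a=a'=\frac1{16},b=b'$; $\frac{1-i}2$ if $a=a'=\frac1{16},b\neq b'\}$. $\mathrm{IS}^{(l,r)}=\mathrm{IS}^l\times\mathrm{IS}^r$, $\lambda=(h_1,..,h_l,\bar h_1,..,\bar h_r)$, $s(\lambda)=\sum h_i-\sum\bar h_j$; $\star$, $A$ componentwise; $B^{\lambda,\lambda'}_{\lambda^0,\dots,\lambda^3}=\prod_{i\le l}B^{h_i,h'_i}_{h^0_i,\dots,h^3_i}\prod_{j\le r}\overline{B^{\bar h_j,\bar h'_j}_{\bar h^0_j,\dots,\bar h^3_j}}$. An $(l,r)$-framed algebra: finite-dimensional $\mathrm{IS}^{(l,r)}$-graded $S=\bigoplus S_\lambda$ over $\mathbb{C}$ with bilinear product, nonzero $1\in S_0$, $a\cdot_\lambda b$ the $S_\lambda$-component of $a\cdot b$, satisfying (FA1) $S_\lambda=0$ unless $s(\lambda)\in\mathbb{Z}$; (FA2) $S_0=\mathbb{C}1$, $1$ a two-sided unit; (FA3) $S_{\lambda^1}\cdot S_{\lambda^2}\subset\bigoplus_{\lambda\in\lambda^1\star\lambda^2}S_\lambda$; (FA4) $a_2\cdot_{\lambda^0}(a_1\cdot_{\lambda'}a_3)=\sum_{\lambda\in A(\lambda^0,\lambda^1,\lambda^2,\lambda^3)}B^{\lambda,\lambda'}_{\lambda^0,\lambda^1,\lambda^2,\lambda^3}a_1\cdot_{\lambda^0}(a_2\cdot_\lambda a_3)$ for $a_i\in S_{\lambda^i}$, $\lambda'\in A(\lambda^0,\lambda^2,\lambda^1,\lambda^3)$.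 Ideal: graded subspace $M$ with $S\cdot M\subset M$; simple: only ideals $0$ and $S$. Identify $\mathrm{IS}$ with $\{(d,c)\in\mathbb{Z}_2^2:dc=0\}$ via $0\leftrightarrow(0,0)$, $\frac12\leftrightarrow(0,1)$, $\frac1{16}\leftrightarrow(1,0)$, and componentwise $\mathrm{IS}^{(l,r)}$ with pairs $(d,c)\in(\mathbb{Z}_2^{l+r})^2$, $dc=0$. For $c\in\mathbb{Z}_2^{l+r}$, $|c|=|c|_l-|c|_r$ where $|c|_l,|c|_r$ count ones in the first $l$ and last $r$ coordinates. $C_S=\{\alpha:S_{(0,\alpha)}\ne0\}$, $I_S=\{(d,c):S_{(d,c)}\ne0\}$. *)

(* Defs.v *)
From HB Require Import structures.
From mathcomp Require Import all_boot all_order all_algebra.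
From mathcomp Require Import Rstruct complex.
From Stdlib Require Rtrigo_def Rtrigo1.
Set Implicit Arguments. Unset Strict Implicit. Unset Printing Implicit Defensive.
Import Order.TTheory GRing.Theory Num.Theory.
Local Open Scope ring_scope.

Definition CC : numClosedFieldType := complex Rdefinitions.R.

(* e^{-pi i/8} = cos(pi/8) - i sin(pi/8) *)
Definition zeta8 : CC :=
  @Complex Rdefinitions.R (Rtrigo_def.cos (Rtrigo1.PI / 8%:R))
                          (- Rtrigo_def.sin (Rtrigo1.PI / 8%:R)).

Inductive IS := IS0 | IShalf | IS16.

Definition IS_to_ord (h : IS) : 'I_3 :=
  match h with IS0 => inord 0 | IShalf => inord 1 | IS16 => inord 2 end.
Definition ord_to_IS (i : 'I_3) : IS :=
  match val i with 0 => IS0 | 1 => IShalf | _ => IS16 end.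
Lemma IS_ordK : cancel IS_to_ord ord_to_IS.
Proof. by case; rewrite /ord_to_IS /= inordK. Qed.
HB.instance Definition _ := Finite.copy IS (can_type IS_ordK).

Definition ISweight (h : IS) : rat :=
  match h with IS0 => 0 | IShalf => 2^-1 | IS16 => 16%:R^-1 end.

(* fusion rule: fus h1 h2 h  <=>  h \in h1 * h2 *)
Definition fus (h1 h2 h : IS) : bool :=
  match h1, h2 with
  | IS0, _ => h == h2
  | _, IS0 => h == h1
  | IShalf, IShalf => h == IS0
  | IShalf, IS16 | IS16, IShalf => h == IS16
  | IS16, IS16 => (h == IS0) || (h == IShalf)
  end.

Definition Aset (h0 h1 h2 h3 h : IS) : bool := fus h2 h3 h && fus h1 h h0.

Definition Bcoef (h0 h1 h2 h3 h h' : IS) : CC :=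
  match h1, h2 with
  | IS0, _ | _, IS0 => 1
  | IShalf, IShalf => -1
  | IShalf, IS16 | IS16, IShalf =>
      if (h0 == IShalf) || (h3 == IShalf) then 'i else - 'i
  | IS16, IS16 =>
      zeta8 *
      (if (h0 != IS16) && (h3 != IS16) then
         (if h0 == h3 then 1 else 'i)
       else if (h0 == IS16) && (h3 == IS16) then
         (if h == h' then (1 + 'i) / 2%:R else (1 - 'i) / 2%:R)
       else 0 (* never occurs: A(...) is empty in this case *))
  end.

Definition grade (l r : nat) : finType :=
  ({ffun 'I_l -> IS} * {ffun 'I_r -> IS})%type.

Definition gzero l r : grade l r := ([ffun=> IS0], [ffun=> IS0]).

Definition gweight l r (la : grade l r) : rat :=
  \sum_(i < l) ISweight (la.1 i) - \sum_(j < r) ISweight (la.2 j).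

Definition gfus l r (la1 la2 la : grade l r) : bool :=
  [forall i, fus (la1.1 i) (la2.1 i) (la.1 i)] &&
  [forall j, fus (la1.2 j) (la2.2 j) (la.2 j)].

Definition gA l r (la0 la1 la2 la3 la : grade l r) : bool :=
  [forall i, Aset (la0.1 i) (la1.1 i) (la2.1 i) (la3.1 i) (la.1 i)] &&
  [forall j, Aset (la0.2 j) (la1.2 j) (la2.2 j) (la3.2 j) (la.2 j)].

Definition gB l r (la0 la1 la2 la3 la la' : grade l r) : CC :=
  (\prod_(i < l) Bcoef (la0.1 i) (la1.1 i) (la2.1 i) (la3.1 i) (la.1 i) (la'.1 i))
  * (\prod_(j < r) (Bcoef (la0.2 j) (la1.2 j) (la2.2 j) (la3.2 j) (la.2 j) (la'.2 j))^*).

(* The identification IS = {(d,c) in Z2^2 | dc = 0}, componentwise.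
   A vector in Z2^{l+r} is a pair (first l coordinates, last r ones). *)
Definition Z2vec (l r : nat) : finType :=
  ({ffun 'I_l -> bool} * {ffun 'I_r -> bool})%type.

Definition IS_of_dc (d c : bool) : IS :=
  match d, c with
  | false, false => IS0
  | false, true => IShalf
  | true, false => IS16
  | true, true => IS0 (* excluded by dc = 0 *)
  end.

Definition dc_ok l r (d c : Z2vec l r) : bool :=
  [forall i, ~~ (d.1 i && c.1 i)] && [forall j, ~~ (d.2 j && c.2 j)].

Definition grade_of l r (d c : Z2vec l r) : grade l r :=
  ([ffun i => IS_of_dc (d.1 i) (c.1 i)], [ffun j => IS_of_dc (d.2 j) (c.2 j)]).

Definition z2zero l r : Z2vec l r := ([ffun=> false], [ffun=> false]).

Definition z2mul l r (a b : Z2vec l r) : Z2vec l r :=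
  ([ffun i => a.1 i && b.1 i], [ffun j => a.2 j && b.2 j]).

Definition z2norm l r (c : Z2vec l r) : int :=
  (#|[pred i | c.1 i]|%:Z - #|[pred j | c.2 j]|%:Z)%R.

(* A finite-dimensional IS^{(l,r)}-graded space
   S = (+)_la S_la is given by a finite-dimensional C-vector space V
   together with the family of projections  pi la : V -> V  onto the
   homogeneous components (linear, idempotent, mutually annihilating,
   summing to the identity).  S_la is the image of pi la.  The product
   is a bilinear map mul, and  a ._la b := pi la (mul a b).          *)

Definition is_grading l r (V : vectType CC) (pi : grade l r -> V -> V) : Prop :=
  [/\ forall la, linear (pi la),
      forall la x, pi la (pi la x) = pi la x,
      forall la mu x, la != mu -> pi la (pi mu x) = 0
    & forall x, x = \sum_la pi la x].

Definition homog l r (V : vectType CC) (pi : grade l r -> V -> V)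
  (la : grade l r) (x : V) : Prop := pi la x = x.

Definition is_framed_algebra l r (V : vectType CC)
  (pi : grade l r -> V -> V) (mul : V -> V -> V) (one : V) : Prop :=
  [/\ is_grading pi /\
      ((forall a, linear (mul a)) /\ (forall b, linear (mul^~ b))),
      (forall la x, ~~ (gweight la \is a Num.int) -> pi la x = 0),
      [/\ one != 0, homog pi (gzero l r) one,
          (forall x, homog pi (gzero l r) x -> exists k : CC, x = k *: one)
        & forall x, mul one x = x /\ mul x one = x],
      (forall la1 la2 la a1 a2, homog pi la1 a1 -> homog pi la2 a2 ->
         ~~ gfus la1 la2 la -> pi la (mul a1 a2) = 0)
    &
      (forall la0 la1 la2 la3 la' a1 a2 a3,
         homog pi la1 a1 -> homog pi la2 a2 -> homog pi la3 a3 ->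
         gA la0 la2 la1 la3 la' ->
         pi la0 (mul a2 (pi la' (mul a1 a3))) =
         \sum_(la | gA la0 la1 la2 la3 la)
            gB la0 la1 la2 la3 la la' *: pi la0 (mul a1 (pi la (mul a2 a3))))].

Definition is_ideal l r (V : vectType CC) (pi : grade l r -> V -> V)
  (mul : V -> V -> V) (M : {vspace V}) : Prop :=
  (forall la x, x \in M -> pi la x \in M) /\
  (forall a x, x \in M -> mul a x \in M).

Definition simple_fa l r (V : vectType CC) (pi : grade l r -> V -> V)
  (mul : V -> V -> V) : Prop :=
  forall M : {vspace V}, is_ideal pi mul M -> M = 0%VS \/ M = fullv.

Definition nonzero_comp l r (V : vectType CC) (pi : grade l r -> V -> V)
  (la : grade l r) : Prop := exists x, homog pi la x /\ x != 0.

Definition in_CS l r (V : vectType CC) (pi : grade l r -> V -> V)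
  (al : Z2vec l r) : Prop := nonzero_comp pi (grade_of (z2zero l r) al).
Definition in_IS l r (V : vectType CC) (pi : grade l r -> V -> V)
  (d c : Z2vec l r) : Prop := dc_ok d c /\ nonzero_comp pi (grade_of d c).

Definition in_AS0 l r (V : vectType CC) (pi : grade l r -> V -> V) (x : V) : Prop :=
  x = \sum_(al : Z2vec l r) pi (grade_of (z2zero l r) al) x.

(* Main.v *)
Require Import Defs.
From mathcomp Require Import all_boot all_order all_algebra.
From mathcomp Require Import Rstruct complex.
From mathcomp Require Import ring.
From Stdlib Require Import FunctionalExtensionality.
Import GRing.Theory Num.Theory.
Set Implicit Arguments. Unset Strict Implicit. Unset Printing Implicit Defensive.
Local Open Scope ring_scope.

Definition IS_eqb (x y : IS) : bool := match x, y with
 | IS0, IS0 | IShalf, IShalf | IS16, IS16 => true | _, _ => false end.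
Lemma eqISE x y : (x == y) = IS_eqb x y.
Proof. by case: x; case: y => //=; rewrite ?eqxx //; apply/eqP. Qed.
Definition sc (b : bool) : IS := IS_of_dc false b.
Definition flip (h : IS) := match h with IS0 => IShalf | IShalf => IS0 | IS16 => IS16 end.
Definition act (b : bool) (h : IS) := if b then flip h else h.
Ltac crunch := rewrite /Aset /fus /act /flip /sc /IS_of_dc /Bcoef ?eqISE.

Lemma C0 b g h : fus (sc b) g h = (h == act b g).
Proof. crunch; by case: b; case: g; case: h. Qed.
Lemma C0' b g h : fus g (sc b) h = (h == act b g).
Proof. crunch; by case: b; case: g; case: h. Qed.
Lemma Ccomm1 x y g h : Aset (act y (act x g)) (sc y) (sc x) g h = (h == act x g).
Proof. crunch; by case: x; case: y; case: g; case: h. Qed.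
Lemma Ccomm2 x y g h : Aset (act y (act x g)) (sc x) (sc y) g h = (h == act y g).
Proof. crunch; by case: x; case: y; case: g; case: h. Qed.
Lemma C1 b g h : Aset (act b g) g (sc b) IS0 h = (h == sc b).
Proof. crunch; by case: b; case: g; case: h. Qed.
Lemma C2 b g h : Aset (act b g) (sc b) g IS0 h = (h == g).
Proof. crunch; by case: b; case: g; case: h. Qed.
Lemma E2a x y g h : Aset (act (x (+) y) g) g (sc x) (sc y) h = (h == sc (x (+) y)).
Proof. crunch; by case: x; case: y; case: g; case: h. Qed.
Lemma E2b x y g h : Aset (act (x (+) y) g) (sc x) g (sc y) h = (h == act y g).
Proof. crunch; by case: x; case: y; case: g; case: h. Qed.
Lemma Cbcomm x y h0 h3 h h' : Bcoef h0 (sc x) (sc y) h3 h h' = if x && y then -1 else 1.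
Proof. by case: x; case: y. Qed.
Lemma Hii : 'i * 'i = -1 :> CC. Proof. by rewrite -expr2 sqrCi. Qed.
Lemma Cid x y g :
  let z := x (+) y in let L := act y g in
  Bcoef (act z g) g (sc z) IS0 (sc z) g * Bcoef (act z g) (sc x) g (sc y) (act y g) (sc z)
  = Bcoef (act y g) g (sc y) IS0 (sc y) g *
    (Bcoef (act x L) L (sc x) IS0 (sc x) L * Bcoef (act x L) (sc x) L IS0 L (sc x)).
Proof. rewrite /=. crunch; case: x; case: y; case: g => /=;
  rewrite ?(mulNr, mulrN, mul1r, mulr1, opprK, Hii) //.
Qed.
Lemma act_comm x y g : act x (act y g) = act y (act x g).
Proof. by case: x; case: y; case: g. Qed.
Lemma act_sc x y : act x (sc y) = sc (x (+) y).
Proof. by case: x; case: y. Qed.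
Lemma act_act x y g : act x (act y g) = act (x (+) y) g.
Proof. by case: x; case: y; case: g. Qed.

Notation gsc := (grade_of (z2zero _ _)).
Definition gact l r (al : Z2vec l r) (la : grade l r) : grade l r :=
  ([ffun i => act (al.1 i) (la.1 i)], [ffun j => act (al.2 j) (la.2 j)]).
Definition z2xor l r (a b : Z2vec l r) : Z2vec l r :=
  ([ffun i => a.1 i (+) b.1 i], [ffun j => a.2 j (+) b.2 j]).

Lemma gradeP l r (la mu : grade l r) :
  (forall i, la.1 i = mu.1 i) -> (forall j, la.2 j = mu.2 j) -> la = mu.
Proof.
case: la mu => [f g] [f' g'] /= H1 H2; congr pair; exact/ffunP.
Qed.

Lemma gsc1 l r (al : Z2vec l r) i : (gsc al).1 i = sc (al.1 i).
Proof. by rewrite /grade_of /z2zero /= !ffunE. Qed.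
Lemma gsc2 l r (al : Z2vec l r) j : (gsc al).2 j = sc (al.2 j).
Proof. by rewrite /grade_of /z2zero /= !ffunE. Qed.
Lemma gact1 l r (al : Z2vec l r) la i : (gact al la).1 i = act (al.1 i) (la.1 i).
Proof. by rewrite /gact /= ffunE. Qed.
Lemma gact2 l r (al : Z2vec l r) la j : (gact al la).2 j = act (al.2 j) (la.2 j).
Proof. by rewrite /gact /= ffunE. Qed.
Lemma z2xor1 l r (a b : Z2vec l r) i : (z2xor a b).1 i = a.1 i (+) b.1 i.
Proof. by rewrite /z2xor /= ffunE. Qed.
Lemma z2xor2 l r (a b : Z2vec l r) j : (z2xor a b).2 j = a.2 j (+) b.2 j.
Proof. by rewrite /z2xor /= ffunE. Qed.
Lemma gzero1 l r i : (gzero l r).1 i = IS0. Proof. by rewrite /gzero /= ffunE. Qed.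
Lemma gzero2 l r j : (gzero l r).2 j = IS0. Proof. by rewrite /gzero /= ffunE. Qed.

Ltac gsimpl := rewrite ?(gsc1, gsc2, gact1, gact2, z2xor1, z2xor2, gzero1, gzero2).

Lemma gact_comm l r (x y : Z2vec l r) la : gact x (gact y la) = gact y (gact x la).
Proof. by apply: gradeP => i; gsimpl; rewrite act_comm. Qed.
Lemma gact_sc l r (x y : Z2vec l r) : gact x (gsc y) = gsc (z2xor x y).
Proof. by apply: gradeP => i; gsimpl; rewrite act_sc. Qed.
Lemma gact_act l r (x y : Z2vec l r) la : gact x (gact y la) = gact (z2xor x y) la.
Proof. by apply: gradeP => i; gsimpl; rewrite act_act. Qed.

Lemma gsc_inj l r (x y : Z2vec l r) : gsc x = gsc y -> x = y.
Proof.
move=> E; case: x y E => [f g] [f' g'] E; congr pair; apply/ffunP => i.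
- have := congr1 (fun la : grade l r => la.1 i) E => /=; rewrite !ffunE.
  by case: (f i); case: (f' i).
- have := congr1 (fun la : grade l r => la.2 i) E => /=; rewrite !ffunE.
  by case: (g i); case: (g' i).
Qed.

Lemma gA_single l r (la0 la1 la2 la3 mu : grade l r) :
 (forall i h, Aset (la0.1 i) (la1.1 i) (la2.1 i) (la3.1 i) h = (h == mu.1 i)) ->
 (forall j h, Aset (la0.2 j) (la1.2 j) (la2.2 j) (la3.2 j) h = (h == mu.2 j)) ->
 gA la0 la1 la2 la3 =1 pred1 mu.
Proof.
move=> H1 H2 la /=; rewrite /gA.
transitivity ([forall i, la.1 i == mu.1 i] && [forall j, la.2 j == mu.2 j]).
  by congr andb; apply: eq_forallb => i; rewrite ?H1 ?H2.
case: la => f g; case: mu {H1 H2} => f' g' /=; rewrite xpair_eqE.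
by congr andb; apply/forallP/eqP => [H|-> //]; apply/ffunP => i; exact/eqP.
Qed.

Lemma gfus_single l r (la1 la2 mu : grade l r) :
 (forall i h, fus (la1.1 i) (la2.1 i) h = (h == mu.1 i)) ->
 (forall j h, fus (la1.2 j) (la2.2 j) h = (h == mu.2 j)) ->
 gfus la1 la2 =1 pred1 mu.
Proof.
move=> H1 H2 la /=; rewrite /gfus.
transitivity ([forall i, la.1 i == mu.1 i] && [forall j, la.2 j == mu.2 j]).
  by congr andb; apply: eq_forallb => i; rewrite ?H1 ?H2.
case: la => f g; case: mu {H1 H2} => f' g' /=; rewrite xpair_eqE.
by congr andb; apply/forallP/eqP => [H|-> //]; apply/ffunP => i; exact/eqP.
Qed.

Lemma gfus_l l r (al : Z2vec l r) la : gfus (gsc al) la =1 pred1 (gact al la).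
Proof. by apply: gfus_single => i h; gsimpl; rewrite C0. Qed.
Lemma gfus_r l r (al : Z2vec l r) la : gfus la (gsc al) =1 pred1 (gact al la).
Proof. by apply: gfus_single => i h; gsimpl; rewrite C0'. Qed.

Lemma linD (V : vectType CC) (f : V -> V) : linear f -> forall x y, f (x + y) = f x + f y.
Proof. by move=> Hf x y; have := Hf 1 x y; rewrite !scale1r. Qed.
Lemma lin0 (V : vectType CC) (f : V -> V) : linear f -> f 0 = 0.
Proof.
move=> Hf; have H := linD Hf 0 0; rewrite addr0 in H.
by apply: (@addrI _ (f 0)); rewrite addr0 -H.
Qed.
Lemma linZ (V : vectType CC) (f : V -> V) : linear f -> forall a x, f (a *: x) = a *: f x.
Proof. by move=> Hf a x; have := Hf a x 0; rewrite !addr0 (lin0 Hf) addr0. Qed.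
Lemma lin_sum (V : vectType CC) (f : V -> V) (I : Type) (s : seq I) (P : pred I) F :
  linear f -> f (\sum_(i <- s | P i) F i) = \sum_(i <- s | P i) f (F i).
Proof. by move=> Hf; apply: (big_morph f (linD Hf) (lin0 Hf)). Qed.

Lemma homog_other l r (V : vectType CC) (pi : grade l r -> V -> V) la mu x :
  is_grading pi -> homog pi la x -> mu != la -> pi mu x = 0.
Proof. by case=> _ _ Ho _ Hx Hmu; rewrite -Hx Ho. Qed.

Lemma homog_of_zero l r (V : vectType CC) (pi : grade l r -> V -> V) la x :
  is_grading pi -> (forall mu, mu != la -> pi mu x = 0) -> homog pi la x.
Proof.
case=> _ _ _ Hs H; rewrite /homog {2}(Hs x) (bigD1 la) //= big1 ?addr0 //.
Qed.

Lemma mul_homog_l l r (V : vectType CC) (pi : grade l r -> V -> V) mul one al la a w :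
  is_framed_algebra pi mul one -> homog pi (gsc al) a -> homog pi la w ->
  homog pi (gact al la) (mul a w).
Proof.
case=> [[Hg _] _ _ H3 _] Ha Hw; apply: homog_of_zero => // mu Hmu.
by apply: (H3 _ _ _ _ _ Ha Hw); rewrite gfus_l.
Qed.

Lemma mul_homog_r l r (V : vectType CC) (pi : grade l r -> V -> V) mul one al la a w :
  is_framed_algebra pi mul one -> homog pi (gsc al) a -> homog pi la w ->
  homog pi (gact al la) (mul w a).
Proof.
case=> [[Hg _] _ _ H3 _] Ha Hw; apply: homog_of_zero => // mu Hmu.
by apply: (H3 _ _ _ _ _ Hw Ha); rewrite gfus_r.
Qed.

Lemma FA4h l r (V : vectType CC) (pi : grade l r -> V -> V) mul one
  la0 la1 la2 la3 la la' a1 a2 a3 :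
  is_framed_algebra pi mul one ->
  homog pi la1 a1 -> homog pi la2 a2 -> homog pi la3 a3 ->
  gA la0 la2 la1 la3 =1 pred1 la' -> gA la0 la1 la2 la3 =1 pred1 la ->
  homog pi la' (mul a1 a3) -> homog pi la (mul a2 a3) ->
  homog pi la0 (mul a2 (mul a1 a3)) -> homog pi la0 (mul a1 (mul a2 a3)) ->
  mul a2 (mul a1 a3) = gB la0 la1 la2 la3 la la' *: mul a1 (mul a2 a3).
Proof.
case=> _ _ _ _ H4 h1 h2 h3 HA' HA Hh' Hh Hh0 Hh0'.
have HA0 : gA la0 la2 la1 la3 la' by rewrite HA' /= eqxx.
have := H4 la0 la1 la2 la3 la' a1 a2 a3 h1 h2 h3 HA0.
by rewrite Hh' Hh0 (big_pred1 la HA) Hh Hh0'.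
Qed.

Lemma skew l r (V : vectType CC) (pi : grade l r -> V -> V) mul one
  la0 la1 la2 a1 a2 :
  is_framed_algebra pi mul one ->
  homog pi la1 a1 -> homog pi la2 a2 ->
  gA la0 la2 la1 (gzero l r) =1 pred1 la1 -> gA la0 la1 la2 (gzero l r) =1 pred1 la2 ->
  homog pi la0 (mul a2 a1) -> homog pi la0 (mul a1 a2) ->
  mul a2 a1 = gB la0 la1 la2 (gzero l r) la2 la1 *: mul a1 a2.
Proof.
move=> Hfa; have Hfa' := Hfa; case: Hfa' => _ _ [_ Hone _ Hu] _ _ h1 h2 HA' HA H0 H0'.
have E1 : mul a1 one = a1 by case: (Hu a1).
have E2 : mul a2 one = a2 by case: (Hu a2).
have := FA4h Hfa h1 h2 Hone HA' HA; rewrite E1 E2; apply => //.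
Qed.

Lemma skew_sc l r (V : vectType CC) (pi : grade l r -> V -> V) mul one
  (ga : Z2vec l r) la c w :
  is_framed_algebra pi mul one -> homog pi (gsc ga) c -> homog pi la w ->
  mul w c = gB (gact ga la) (gsc ga) la (gzero l r) la (gsc ga) *: mul c w /\
  mul c w = gB (gact ga la) la (gsc ga) (gzero l r) (gsc ga) la *: mul w c.
Proof.
move=> Hfa Hc Hw.
have Hcw := mul_homog_l Hfa Hc Hw; have Hwc := mul_homog_r Hfa Hc Hw.
have A1 : gA (gact ga la) la (gsc ga) (gzero l r) =1 pred1 (gsc ga).
  by apply: gA_single => i h; gsimpl; rewrite C1.
have A2 : gA (gact ga la) (gsc ga) la (gzero l r) =1 pred1 la.
  by apply: gA_single => i h; gsimpl; rewrite C2.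
split; [exact: (skew Hfa Hc Hw A1 A2 Hwc Hcw) | exact: (skew Hfa Hw Hc A2 A1 Hcw Hwc)].
Qed.

Lemma sign_prod n (f : 'I_n -> bool) :
  \prod_(i < n) (if f i then -1 else 1) = (-1) ^+ #|[pred i | f i]| :> CC.
Proof. by rewrite -prodr_const [RHS]big_mkcond. Qed.

Lemma gB_comm l r (x y : Z2vec l r) la0 la3 la la' :
  gB la0 (gsc x) (gsc y) la3 la la' = (-1) ^ z2norm (z2mul x y).
Proof.
rewrite /gB.
rewrite (eq_bigr (fun i => if (z2mul x y).1 i then -1 else 1)); last first.
  by move=> i _; gsimpl; rewrite Cbcomm /z2mul /= ffunE.
rewrite (eq_bigr (fun j => if (z2mul x y).2 j then -1 else 1)); last first.
  by move=> j _; gsimpl; rewrite Cbcomm /z2mul /= ffunE; case: ifP; rewrite ?conjCN1 ?conjC1.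
rewrite !sign_prod /z2norm expfzDr; last by rewrite oppr_eq0 oner_eq0.
by rewrite -exprnN invr_sign.
Qed.

Lemma comm_main l r (V : vectType CC) (pi : grade l r -> V -> V) mul one
  (x y : Z2vec l r) la a b v :
  is_framed_algebra pi mul one -> homog pi (gsc x) a -> homog pi (gsc y) b ->
  homog pi la v ->
  mul b (mul a v) = ((-1) ^ z2norm (z2mul x y)) *: mul a (mul b v).
Proof.
move=> Hfa Ha Hb Hv.
rewrite -(gB_comm x y (gact y (gact x la)) la (gact y la) (gact x la)).
apply: (FA4h Hfa Ha Hb Hv).
- by apply: gA_single => i h; gsimpl; rewrite Ccomm1.
- by apply: gA_single => i h; gsimpl; rewrite Ccomm2.
- exact: (mul_homog_l Hfa).
- exact: (mul_homog_l Hfa).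
- by apply: (mul_homog_l Hfa) => //; apply: (mul_homog_l Hfa).
- by rewrite gact_comm; apply: (mul_homog_l Hfa) => //; apply: (mul_homog_l Hfa).
Qed.

Lemma prod5 n (f1 f2 f3 f4 f5 : 'I_n -> CC) :
  (forall i, f1 i * f2 i = f3 i * (f4 i * f5 i)) ->
  (\prod_i f1 i) * (\prod_i f2 i) = (\prod_i f3 i) * ((\prod_i f4 i) * (\prod_i f5 i)).
Proof.
by move=> H; rewrite -!big_split /=; apply: eq_bigr => i _; rewrite H.
Qed.

Lemma prod5c n (f1 f2 f3 f4 f5 : 'I_n -> CC) :
  (forall i, f1 i * f2 i = f3 i * (f4 i * f5 i)) ->
  (\prod_i (f1 i)^*) * (\prod_i (f2 i)^*) =
  (\prod_i (f3 i)^*) * ((\prod_i (f4 i)^*) * (\prod_i (f5 i)^*)).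
Proof.
by move=> H; apply: prod5 => i; rewrite -!rmorphM H.
Qed.

Lemma rearr (L1 L2 L3 L4 L5 R1 R2 R3 R4 R5 : CC) :
  L1 * L2 = L3 * (L4 * L5) -> R1 * R2 = R3 * (R4 * R5) ->
  (L1 * R1) * (L2 * R2) = (L3 * R3) * ((L4 * R4) * (L5 * R5)).
Proof. by move=> H1 H2; rewrite mulrACA H1 H2; ring. Qed.

Lemma assoc_main l r (V : vectType CC) (pi : grade l r -> V -> V) mul one
  (x y : Z2vec l r) la a b v :
  is_framed_algebra pi mul one -> homog pi (gsc x) a -> homog pi (gsc y) b ->
  homog pi la v ->
  mul a (mul b v) = mul (mul a b) v.
Proof.
move=> Hfa Ha Hb Hv.
have Hfa' := Hfa; case: Hfa' => [[Hg [Hml Hmr]]] _ _ _ _.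
set z := z2xor x y.
have Hab : homog pi (gsc z) (mul a b) by rewrite -gact_sc; exact: (mul_homog_l Hfa).
have Hvb : homog pi (gact y la) (mul v b) by exact: (mul_homog_r Hfa).
have [_ E1] := skew_sc Hfa Hab Hv.
have [_ E3] := skew_sc Hfa Hb Hv.
have [PA PB] := skew_sc Hfa Ha Hvb.
have E2 : mul v (mul a b) =
  gB (gact z la) (gsc x) la (gsc y) (gact y la) (gsc z) *: mul a (mul v b).
  apply: (FA4h Hfa Ha Hv Hb).
  - apply: gA_single => i h; rewrite /z; gsimpl; exact: E2a.
  - apply: gA_single => i h; rewrite /z; gsimpl; exact: E2b.
  - exact: Hab.
  - exact: Hvb.
  - exact: (mul_homog_r Hfa).
  - by rewrite /z -gact_act; apply: (mul_homog_l Hfa).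
rewrite E1 E2 E3 linZ // scalerA.
have HX : mul a (mul v b) =
  (gB (gact x (gact y la)) (gact y la) (gsc x) (gzero l r) (gsc x) (gact y la) *
   gB (gact x (gact y la)) (gsc x) (gact y la) (gzero l r) (gact y la) (gsc x))
  *: mul a (mul v b).
  by rewrite {1}PB {1}PA scalerA.
have HB : gB (gact z la) la (gsc z) (gzero l r) (gsc z) la *
          gB (gact z la) (gsc x) la (gsc y) (gact y la) (gsc z) =
  gB (gact y la) la (gsc y) (gzero l r) (gsc y) la *
  (gB (gact x (gact y la)) (gact y la) (gsc x) (gzero l r) (gsc x) (gact y la) *
   gB (gact x (gact y la)) (gsc x) (gact y la) (gzero l r) (gact y la) (gsc x)).
  rewrite /gB; apply: rearr.
    by apply: prod5 => i; rewrite /z; gsimpl; exact: Cid.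
  by apply: prod5c => i; rewrite /z; gsimpl; exact: Cid.
by rewrite HB -scalerA -HX.
Qed.

Lemma mul_suml (V : vectType CC) (mul : V -> V -> V) (I : Type) (s : seq I) (P : pred I) F w :
  (forall b, linear (mul^~ b)) ->
  mul (\sum_(i <- s | P i) F i) w = \sum_(i <- s | P i) mul (F i) w.
Proof. by move=> H; apply: (big_morph (mul^~ w) (linD (H w)) (lin0 (H w))). Qed.
Lemma mul_sumr (V : vectType CC) (mul : V -> V -> V) (I : Type) (s : seq I) (P : pred I) F w :
  (forall a, linear (mul a)) ->
  mul w (\sum_(i <- s | P i) F i) = \sum_(i <- s | P i) mul w (F i).
Proof. by move=> H; apply: (big_morph (mul w) (linD (H w)) (lin0 (H w))). Qed.
Lemma pi_sum l r (V : vectType CC) (pi : grade l r -> V -> V) la (I : Type) (s : seq I) (P : pred I) F :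
  is_grading pi -> pi la (\sum_(i <- s | P i) F i) = \sum_(i <- s | P i) pi la (F i).
Proof. by case=> H _ _ _; apply: (big_morph (pi la) (linD (H la)) (lin0 (H la))). Qed.

Lemma sum_gsc_homog l r (V : vectType CC) (pi : grade l r -> V -> V) (de : Z2vec l r) x :
  is_grading pi -> homog pi (gsc de) x -> \sum_(al : Z2vec l r) pi (gsc al) x = x.
Proof.
move=> Hg Hx; rewrite (bigD1 de) //= Hx big1 ?addr0 // => al Hal.
apply: (homog_other Hg Hx); apply: contra Hal => /eqP/gsc_inj ->; by [].
Qed.

Theorem mainTheorem6 (l r : nat) (V : vectType CC)
  (pi : grade l r -> V -> V) (mul : V -> V -> V) (one : V) :
  is_framed_algebra pi mul one ->
  simple_fa pi mul ->
  (forall (al1 al2 d c : Z2vec l r) (a1 a2 v : V),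
     in_CS pi al1 -> in_CS pi al2 -> in_IS pi d c ->
     homog pi (grade_of (z2zero l r) al1) a1 ->
     homog pi (grade_of (z2zero l r) al2) a2 ->
     homog pi (grade_of d c) v ->
     mul a2 (mul a1 v) = ((-1) ^ z2norm (z2mul al1 al2)) *: mul a1 (mul a2 v)
     /\ mul a1 (mul a2 v) = mul (mul a1 a2) v)
  /\ (forall a b : V, in_AS0 pi a -> in_AS0 pi b ->
        in_AS0 pi (mul a b) /\ mul (mul a b) = (fun v => mul a (mul b v))).
Proof.
move=> Hfa _; have Hfa' := Hfa; case: Hfa' => [[Hg [Hml Hmr]]] _ _ _ _.
split.
  move=> al1 al2 d c a1 a2 v _ _ _ H1 H2 Hv; split.
    exact: (comm_main Hfa H1 H2 Hv).
  exact: (assoc_main Hfa H1 H2 Hv).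
move=> a b Ha Hb.
have Hsum : forall x, x = \sum_la pi la x by case: Hg.
have Hidem : forall la x, homog pi la (pi la x) by case: Hg.
have Ht : forall al be : Z2vec l r,
    homog pi (gsc (z2xor al be)) (mul (pi (gsc al) a) (pi (gsc be) b)).
  by move=> al be; rewrite -gact_sc; apply: (mul_homog_l Hfa).
have E : mul a b = \sum_(al : Z2vec l r) \sum_(be : Z2vec l r)
                     mul (pi (gsc al) a) (pi (gsc be) b).
  transitivity (mul (\sum_(al : Z2vec l r) pi (gsc al) a)
                    (\sum_(be : Z2vec l r) pi (gsc be) b)); first by rewrite -Ha -Hb.
  rewrite mul_suml //; apply: eq_bigr => al _; by rewrite mul_sumr.
split.
  rewrite /in_AS0 {1}E; symmetry.
  rewrite (eq_bigr (fun ga => \sum_(al : Z2vec l r) \sum_(be : Z2vec l r)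
       pi (gsc ga) (mul (pi (gsc al) a) (pi (gsc be) b)))); last first.
    move=> ga _; rewrite E pi_sum //; apply: eq_bigr => al _; by rewrite pi_sum.
  rewrite exchange_big /=; apply: eq_bigr => al _.
  rewrite exchange_big /=; apply: eq_bigr => be _.
  exact: (sum_gsc_homog Hg (Ht al be)).
apply: functional_extensionality => w.
rewrite E.
transitivity (mul (\sum_(al : Z2vec l r) \sum_(be : Z2vec l r)
                     mul (pi (gsc al) a) (pi (gsc be) b)) (\sum_la pi la w)).
  by rewrite -Hsum.
transitivity (mul (\sum_(al : Z2vec l r) pi (gsc al) a)
                  (mul (\sum_(be : Z2vec l r) pi (gsc be) b) (\sum_la pi la w))); last first.
  by rewrite -Ha -Hb -Hsum.
rewrite [in LHS]mul_suml // [in RHS]mul_suml //; apply: eq_bigr => al _.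
rewrite [in LHS]mul_suml // [in RHS]mul_suml // [in RHS]mul_sumr //; apply: eq_bigr => be _.
rewrite [in LHS]mul_sumr // [in RHS]mul_sumr // [in RHS]mul_sumr //; apply: eq_bigr => la _.
symmetry; exact: (assoc_main Hfa (Hidem _ _) (Hidem _ _) (Hidem _ _)).
Qed.
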